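(* In the roundabout exploration process described in the context, let $t\in[N]$, let $s=|A(t)|$, and let $1\le i_1<i_2<\dots<i_s\le N$ be the initial states of the agents in $A(t)$ (so $A(t)=\{a_{i_1},\dots,a_{i_s}\}$). Then $[\![i_\ell,i_{\ell+1}[\![\subseteq D_{i_\ell}(t)$ for every $\ell\in[s-1]$, and $[\![i_s,i_1[\![\subseteq D_{i_s}(t)$.
   Context: Let $n\ge 2$ and $k$ be natural numbers, $T$ a tree on an $n$-element vertex set $V$, and $N=2(n-1)$. Fix a root $r$ and a DFS tour of $T$ starting and ending at $r$ that traverses each edge of $T$ exactly twice, giving a cyclic vertex sequence $(v_1,\dots,v_N,v_{N+1})$ with $v_{N+1}=v_1=r$, and tour edges $e_i=\{v_i,v_{i+1}\}$ for $i\in[N]$. For $i,j\in[N]$ the circular interval $[\![i,j]\!]$ is $\{i,i+1,\dots,j\}$ if $i\le j$ and $\{i,\dots,N,1,\dots,j\}$ if $i>j$; $[\![i,j[\![$ denotes $[\![i,j]\!]\setminus\{j\}$. Let $\langle G_1,\dots,G_N\rangle$ be graphs on $V$, each containing all but at most $k$ edges of $T$. Roundabout exploration process: agents $a_1,\dots,a_N$ with initial states $s_i(0)=i$. For steps $t=1,\dots,N$: (Movement) for every $i\in[N]$, if $s_i(t-1)=q$ then $s_i(t)=(q\bmod N)+1$ if $e_q\in E(G_t)$, and $s_i(t)=q$ otherwise. Let $D_i(t)=[\![i,s_i(t)]\!]$ and $D_i(0)=\{i\}$. (Elimination) $A(0)=\{a_1,\dots,a_N\}$; $A(t)$ is obtained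 from $A(t-1)$ by repeatedly removing an arbitrary agent $a_i$ of the current set with $D_i(t)\subseteq\bigcup D_j(t)$ over the other agents $a_j$ of the current set, until no such agent remains. *)

(* Defs.v *)
(* Indices of the tour / agents are natural numbers 1..N (1-based, as in the paper). *)
From Stdlib Require Import Relation_Operators.
From mathcomp Require Import all_boot.
Set Implicit Arguments. Unset Strict Implicit. Unset Printing Implicit Defensive.

Definition simple_edges (V : finType) (E : {set {set V}}) : Prop :=
  forall e, e \in E -> exists x y : V, x != y /\ e = [set x; y].

Definition gadj (V : finType) (E : {set {set V}}) : rel V :=
  fun x y => [set x; y] \in E.

Definition is_tree (V : finType) (T : {set {set V}}) : Prop :=
  [/\ simple_edges T,
      (forall x y : V, connect (gadj T) x y) &
      ~ (exists c : seq V, 3 <= size c /\ ucycle (gadj T) c)].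

Definition tour_edge (V : finType) (v : nat -> V) (q : nat) : {set V} := [set v q; v q.+1].

(* A closed tour (v_1, ..., v_N, v_(N+1)) of T from r back to r that traverses
   every edge of T exactly twice (in a tree this is exactly a DFS tour). *)
Definition dfs_tour (V : finType) (T : {set {set V}}) (r : V) (N : nat) (v : nat -> V) : Prop :=
  [/\ v 1 = r, v N.+1 = r,
      (forall q, 1 <= q <= N -> tour_edge v q \in T) &
      (forall e, e \in T -> count (fun q => tour_edge v q == e) (iota 1 N) = 2)].

Definition cint (N i j : nat) : pred nat :=
  [pred x | if i <= j then i <= x <= j else (i <= x <= N) || (1 <= x <= j)].

Definition cint_ho (N i j : nat) : pred nat :=
  [pred x | (x \in cint N i j) && (x != j)].

Fixpoint state (V : finType) (N : nat) (v : nat -> V) (G : nat -> {set {set V}})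
    (i t : nat) : nat :=
  match t with
  | 0 => i
  | t'.+1 => let q := state N v G i t' in
             if tour_edge v q \in G t'.+1 then (q %% N).+1 else q
  end.

Definition Dset (V : finType) (N : nat) (v : nat -> V) (G : nat -> {set {set V}})
    (i t : nat) : pred nat := cint N i (state N v G i t).

(* Agent a_i (identified with its initial state i) is removable from the current
   set S at time t: D_i(t) is covered by the D_j(t) of the other agents a_j of S. *)
Definition removable (V : finType) (N : nat) (v : nat -> V) (G : nat -> {set {set V}})
    (t : nat) (S : pred nat) (i : nat) : Prop :=
  forall x, x \in Dset N v G i t ->
    exists j, [/\ j \in S, j != i & x \in Dset N v G j t].

Definition elim_step (V : finType) (N : nat) (v : nat -> V) (G : nat -> {set {set V}})
    (t : nat) (S S' : pred nat) : Prop :=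
  exists i, [/\ i \in S, removable N v G t S i & S' =i [pred j | (j \in S) && (j != i)]].

Definition valid_elimination (V : finType) (N : nat) (v : nat -> V)
    (G : nat -> {set {set V}}) (A : nat -> pred nat) : Prop :=
  A 0 =i [pred i | 1 <= i <= N] /\
  forall t, 1 <= t <= N ->
    clos_refl_trans (pred nat) (elim_step N v G t) (A t.-1) (A t) /\
    (forall i, i \in A t -> ~ removable N v G t (A t) i).

(* Main.v *)
Require Import Defs.
From Stdlib Require Import Relation_Operators.
From mathcomp Require Import all_boot zify.
Set Implicit Arguments. Unset Strict Implicit.

Definition dd (N a y : nat) := if a <= y then y - a else y + N - a.

Lemma ddP N a y : (a <= y /\ dd N a y = y - a) \/ (y < a /\ dd N a y = y + N - a).
Proof. rewrite /dd; case: leqP => H; [left|right]; split => //. Qed.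

Lemma cintE N i j x : 1 <= i <= N -> 1 <= j <= N ->
  (x \in cint N i j) = (1 <= x <= N) && (dd N i x <= dd N i j).
Proof.
move=> Hi Hj; rewrite inE.
have [[H1 E1]|[H1 E1]] := ddP N i x; have [[H2 E2]|[H2 E2]] := ddP N i j;
 rewrite E1 E2; case: (leqP i j) => H3; apply/idP/idP; lia.
Qed.

Lemma cint_ho_nil N a x : x \in cint_ho N a a -> False.
Proof. rewrite !inE leqnn => /andP[H1 H2]; lia. Qed.

Lemma state_range (V : finType) N (v : nat -> V) G i t : 0 < N -> 1 <= i <= N ->
  1 <= state N v G i t <= N.
Proof.
move=> HN Hi; elim: t => [|t IH] //=.
case: ifP => _ //. have := ltn_pmod (state N v G i t) HN. lia.
Qed.

Lemma state_step (V : finType) N (v : nat -> V) G i t : 1 < N -> 1 <= i <= N ->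
  dd N i (state N v G i t) <= dd N i (state N v G i t.+1) \/
  dd N i (state N v G i t) = N.-1.
Proof.
move=> HN Hi; have := state_range v G t (ltnW HN) Hi => /=.
set q := state N v G i t => Hq.
case: ifP => _; last by left.
have [Hlt|Heq] : q < N \/ q = N by lia.
- rewrite modn_small //.
  have [[H1 E1]|[H1 E1]] := ddP N i q; have [[H2 E2]|[H2 E2]] := ddP N i q.+1;
   rewrite E1 E2; lia.
- rewrite Heq modnn.
  have [[H1 E1]|[H1 E1]] := ddP N i N; have [[H2 E2]|[H2 E2]] := ddP N i 1;
   rewrite E1 E2; lia.
Qed.

Definition Cov (V : finType) N (v : nat -> V) G t (S : pred nat) :=
  forall x, 1 <= x <= N -> exists2 j, j \in S & x \in Dset N v G j t.

Lemma crt_props (V : finType) N (v : nat -> V) G t S S' :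
  clos_refl_trans (pred nat) (elim_step N v G t) S S' ->
  (forall j, j \in S' -> j \in S) /\ (Cov N v G t S -> Cov N v G t S').
Proof.
elim => {S S'}.
- move=> S S' [i [Hi Hrem Heq]]; split.
  + by move=> j; rewrite Heq inE => /andP[].
  + move=> C x Hx; have [j Hj Hxj] := C x Hx.
    case: (eqVneq j i) => [Eji|Nji].
    * subst j; have [j' [Hj' Nj' Hx']] := Hrem x Hxj.
      by exists j' => //; rewrite Heq inE Hj' Nj'.
    * by exists j => //; rewrite Heq inE Hj Nji.
- by move=> S; split.
- move=> S1 S2 S3 _ [A1 B1] _ [A2 B2]; split; auto.
Qed.

Lemma full_cov N i q x : 1 <= i <= N -> 1 <= q <= N -> dd N i q = N.-1 -> 1 <= x <= N ->
  x \in cint N i q.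
Proof.
move=> Hi Hq E Hx; rewrite cintE // Hx E /=.
have [[H1 E1]|[H1 E1]] := ddP N i x; lia.
Qed.

Lemma inv_lemma (V : finType) N (v : nat -> V) G (A : nat -> pred nat) :
  1 < N -> valid_elimination N v G A ->
  forall t, t <= N ->
   (forall j, j \in A t -> 1 <= j <= N) /\
   (Cov N v G t (A t) \/ exists j, forall m, m \in A t -> m = j).
Proof.
move=> HN [H0 Hst]; elim => [|t IH] Ht.
- split; first by move=> j; rewrite H0 inE.
  left => x Hx; exists x; first by rewrite H0 inE.
  by rewrite /Dset /= cintE // leqnn andbT.
- have [Hrt Hnr] := Hst t.+1 Ht.
  have [Hsub Hcov] := crt_props Hrt.
  have [Hr Hc] := IH (ltnW Ht).
  split; first by move=> j /Hsub /Hr.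
  case: Hc => [C|[j Hj]]; last by right; exists j => m /Hsub /Hj.
  have [/hasP [j]|Hno] := boolP (has (fun j => (j \in A t) &&
          (dd N j (state N v G j t) == N.-1)) (iota 1 N)).
  + rewrite mem_iota => Hjr /andP [HjA /eqP Ej].
    have Ht0 : 0 < t.
      case: (posnP t) => // Et; rewrite Et /= /dd leqnn subnn in Ej; lia.
    have [_ Hnr'] := Hst t (ltac:(lia)).
    right; exists j => m Hm; apply/eqP/negPn/negP => Nmj.
    apply: (Hnr' m (Hsub m Hm)) => x Hx; exists j; split => //; first by rewrite eq_sym.
    have Hmr := Hr m (Hsub m Hm).
    have Hsr := state_range v G t (ltnW HN) Hmr.
    rewrite /Dset cintE // in Hx; move: Hx => /andP [Hx _].
    have Hjr' : 1 <= j <= N by lia.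
    rewrite /Dset; apply: full_cov => //; apply: state_range => //; lia.
  + left; apply: Hcov => x Hx.
    have [j HjA Hxj] := C x Hx; exists j => //.
    have Hjr := Hr j HjA.
    have Hs1 := state_range v G t (ltnW HN) Hjr.
    have Hs2 := state_range v G t.+1 (ltnW HN) Hjr.
    case: (state_step v G t HN Hjr) => [Hle|Heq].
    * move: Hxj; rewrite /Dset !cintE // => /andP [-> H]; exact: leq_trans H Hle.
    * exfalso; move/hasPn: Hno => /(_ j); rewrite mem_iota HjA Heq eqxx.
      move=> /(_ ltac:(lia)) //.
Qed.

Lemma arc (V : finType) N (v : nat -> V) G t (S : pred nat) a b :
  0 < N ->
  (forall j, j \in S -> 1 <= j <= N) -> Cov N v G t S ->
  (forall i, i \in S -> ~ removable N v G t S i) ->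
  a \in S -> b \in S ->
  (forall j, j \in S -> j != a -> dd N a b <= dd N a j) ->
  {subset cint_ho N a b <= Dset N v G a t}.
Proof.
move=> HN Hr C Hnr Ha Hb Hgap x.
have Har := Hr a Ha; have Hbr := Hr b Hb.
rewrite inE cintE // => /andP [/andP [Hxr Hxd] Nxb].
have Hxd' : dd N a x < dd N a b.
  rewrite ltn_neqAle Hxd andbT; apply/eqP => E; move/eqP: Nxb; apply.
  have [[H1 E1]|[H1 E1]] := ddP N a x; have [[H2 E2]|[H2 E2]] := ddP N a b; lia.
apply/negPn/negP => Hn.
have [j Hj Hxj] := C x Hxr.
have Nja : j != a by apply/eqP => E; subst j; rewrite Hxj in Hn.
have Hjr := Hr j Hj.
have Hg := Hgap j Hj Nja.
have Hsa := state_range v G t HN Har.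
have Hsj := state_range v G t HN Hjr.
move: Hn Hxj; rewrite /Dset !cintE // Hxr /= -ltnNge => Hn Hxj.
apply: (Hnr a Ha) => y; rewrite /Dset cintE // => /andP [Hyr Hyd].
exists j; split => //.
rewrite /Dset cintE // Hyr /=; apply: leq_trans Hxj.
have Hya : dd N a y < dd N a x by lia.
have Hxj' : dd N a x < dd N a j by lia.
move: Hya Hxj'.
have [[H1 E1]|[H1 E1]] := ddP N a x; have [[H2 E2]|[H2 E2]] := ddP N a y;
have [[H3 E3]|[H3 E3]] := ddP N a j; have [[H4 E4]|[H4 E4]] := ddP N j x;
have [[H5 E5]|[H5 E5]] := ddP N j y; rewrite ?E1 ?E2 ?E3 ?E4 ?E5; lia.
Qed.

Lemma sorted_lt_nth (I : seq nat) p q : sorted ltn I -> p < size I -> q < size I ->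
  p < q -> nth 0 I p < nth 0 I q.
Proof. move=> HS Hp Hq Hpq; exact: (sorted_ltn_nth ltn_trans 0 HS). Qed.

Theorem lemma10 (V : finType) (n k : nat) (T : {set {set V}}) (r : V)
    (v : nat -> V) (G : nat -> {set {set V}}) (A : nat -> pred nat) (t : nat) :
  #|V| = n -> 2 <= n ->
  is_tree T ->
  dfs_tour T r (2 * (n - 1)) v ->
  (forall u, 1 <= u <= 2 * (n - 1) -> simple_edges (G u) /\ #|T :\: G u| <= k) ->
  valid_elimination (2 * (n - 1)) v G A ->
  1 <= t <= 2 * (n - 1) ->
  let N := 2 * (n - 1) in
  let I := [seq x <- iota 1 N | x \in A t] in
  let s := size I in
  (forall l, l < s.-1 ->
     {subset cint_ho N (nth 0 I l) (nth 0 I l.+1) <= Dset N v G (nth 0 I l) t}) /\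
  {subset cint_ho N (nth 0 I s.-1) (nth 0 I 0) <= Dset N v G (nth 0 I s.-1) t}.
Proof.
move=> _ Hn _ _ _ Hval Ht N I s.
have HN : 1 < N by rewrite /N; lia.
have [Hr Hc] := inv_lemma HN Hval (ltac:(lia) : t <= N).
have [_ Hnr] := Hval.2 t Ht.
have HImem : forall j, (j \in I) = (j \in A t) && (1 <= j <= N).
  by move=> j; rewrite /I mem_filter mem_iota; congr andb; lia.
have HIS : sorted ltn I by apply: sorted_filter; [exact: ltn_trans|exact: iota_ltn_sorted].
have HIU : uniq I by rewrite /I filter_uniq // iota_uniq.
have HinS : forall p, p < s -> nth 0 I p \in A t /\ 1 <= nth 0 I p <= N.
  by move=> p Hp; apply/andP; rewrite -HImem mem_nth.
have Hidx : forall j, j \in A t -> exists2 p, p < s & nth 0 I p = j.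
  move=> j Hj; have HjI : j \in I by rewrite HImem Hj Hr.
  by exists (index j I); [rewrite index_mem | rewrite nth_index].
case: Hc => [C|[j0 Hj0]]; last first.
  have Hs : s <= 1.
    have -> : 1 = size [:: j0] by [].
    apply: uniq_leq_size => // x; rewrite HImem inE => /andP [/Hj0 -> _]; exact: eqxx.
  have -> : s.-1 = 0 by lia.
  by split => [l|x /cint_ho_nil].
split.
- move=> l Hl.
  have [Ha Har] := HinS l (ltac:(lia)); have [Hb Hbr] := HinS l.+1 (ltac:(lia)).
  have Hab := sorted_lt_nth HIS (ltac:(lia) : l < size I) (ltac:(lia) : l.+1 < size I) (ltnSn l).
  apply: (arc (ltnW HN) Hr C Hnr Ha Hb) => j Hj Nja.
  have [p Hp Ep] := Hidx j Hj.
  have Hjr : 1 <= j <= N by rewrite -Ep; exact: (HinS p Hp).2.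
  have [Hpl|Hpl|Hpl] := ltngtP p l.
  + have := sorted_lt_nth HIS Hp (ltac:(lia) : l < size I) Hpl; rewrite Ep => Hja.
    have [[H1 E1]|[H1 E1]] := ddP N (nth 0 I l) (nth 0 I l.+1);
    have [[H2 E2]|[H2 E2]] := ddP N (nth 0 I l) j; rewrite E1 E2; lia.
  + have Hjb : nth 0 I l.+1 <= j.
      case: (eqVneq p l.+1) => [Epl|Npl]; first by rewrite -Ep Epl.
      rewrite -Ep; apply: ltnW; apply: sorted_lt_nth => //; lia.
    have [[H1 E1]|[H1 E1]] := ddP N (nth 0 I l) (nth 0 I l.+1);
    have [[H2 E2]|[H2 E2]] := ddP N (nth 0 I l) j; rewrite E1 E2; lia.
  + by rewrite -Ep Hpl eqxx in Nja.
- have [Hs|Hs] : s <= 1 \/ 1 < s by lia.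
    have -> : s.-1 = 0 by lia.
    by move=> x /cint_ho_nil.
  have [Ha Har] := HinS s.-1 (ltac:(lia)); have [Hb Hbr] := HinS 0 (ltac:(lia)).
  have Hab := sorted_lt_nth HIS (ltac:(lia) : 0 < size I) (ltac:(lia) : s.-1 < size I) (ltac:(lia) : 0 < s.-1).
  apply: (arc (ltnW HN) Hr C Hnr Ha Hb) => j Hj Nja.
  have [p Hp Ep] := Hidx j Hj.
  have Hjr : 1 <= j <= N by rewrite -Ep; exact: (HinS p Hp).2.
  have Hja : j < nth 0 I s.-1.
    case: (eqVneq p s.-1) => [Eps|Nps]; first by subst p; rewrite Ep eqxx in Nja.
    rewrite -Ep; apply: sorted_lt_nth => //; lia.
  have Hjb : nth 0 I 0 <= j.
    case: (posnP p) => [Ep0|Pp]; first by subst p; rewrite Ep.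
    rewrite -Ep; apply: ltnW; apply: sorted_lt_nth => //; lia.
  have [[H1 E1]|[H1 E1]] := ddP N (nth 0 I s.-1) (nth 0 I 0);
  have [[H2 E2]|[H2 E2]] := ddP N (nth 0 I s.-1) j; rewrite E1 E2; lia.
Qed.
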